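(* Let $k$ be a positive integer. For integers $0\le j\le k$ define the $q$-fibonomial coefficient $$\left\langle \begin{matrix} k \\ j \end{matrix} \right\rangle (x, s, q) = \frac{\prod_{i=1}^k f(i, x, s)}{\prod_{i=1}^j f(i, x, q^{j-i}s) \prod_{i=1}^{k-j} f(i, x, q^{j} s)}.$$ Then for all $n \in \mathbb{Z}$, $$\sum_{j=0}^{k+1} (-1)^{\binom{j+1}{2}} s^{\binom{j}{2}} q^{\frac{j(j-1)(2j-1)}{6}} \left\langle \begin{matrix} k+1 \\ j \end{matrix} \right\rangle (x, s, q)\, f(n-j, x, q^j s)^k = 0.$$
   Context: Let $x,s,q$ be indeterminates; all quantities live in the field of rational functions in $x,s,q$. The Carlitz $q$-Fibonacci polynomials $f(n,x,s)$ are defined by $f(0,x,s)=0$, $f(1,x,s)=1$ and $f(n, x, s) = x f(n-1, x, s) + q^{n-2} s f(n-2, x, s)$; this recurrence is required to hold for all $n\in\mathbb{Z}$, which uniquely extends $f(n,x,s)$ to negative $n$. Here $f(n,x,q^a s)$ means $f(n,x,s)$ with $s$ replaced by $q^a s$ (with the same $q$). *)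

(* Defs.v *)
From HB Require Import structures.
From mathcomp Require Import all_boot all_order all_algebra.
Set Implicit Arguments. Unset Strict Implicit. Unset Printing Implicit Defensive.
Import Order.TTheory GRing.Theory Num.Theory.
Local Open Scope ring_scope.

(* The field Q(x,s,q) of rational functions, built as Q(q)(s)(x). *)
Definition Fq := {fraction {poly rat}}.
Definition Fqs := {fraction {poly Fq}}.
Definition Fxsq := {fraction {poly Fqs}}.

Definition q_Fq : Fq := tofrac 'X.
Definition s_Fqs : Fqs := tofrac 'X.
Definition q_Fqs : Fqs := tofrac (q_Fq%:P).
Definition varx : Fxsq := tofrac 'X.
Definition vars : Fxsq := tofrac (s_Fqs%:P).
Definition varq : Fxsq := tofrac (q_Fqs%:P).

Section Fib.
Variable K : fieldType.

(* fib_pos x s q m = (f(m), f(m+1)) for m >= 0 *)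
Fixpoint fib_pos (x s q : K) (m : nat) : K * K :=
  match m with
  | 0%N => (0, 1)
  | m'.+1 => let p := fib_pos x s q m' in
             (p.2, x * p.2 + q ^ (m'%:Z) * s * p.1)
  end.

(* fib_neg x s q m = (f(-m), f(-m+1)) for m >= 0, obtained by running the
   recurrence f(n) = x f(n-1) + q^(n-2) s f(n-2) backwards at n = -m+1 *)
Fixpoint fib_neg (x s q : K) (m : nat) : K * K :=
  match m with
  | 0%N => (0, 1)
  | m'.+1 => let p := fib_neg x s q m' in
             ((p.2 - x * p.1) / (q ^ (- (m'%:Z) - 1) * s), p.1)
  end.

Definition fib (x s q : K) (n : int) : K :=
  match n with
  | Posz m => (fib_pos x s q m).1
  | Negz m => (fib_neg x s q m.+1).1
  end.

Definition fibonomial (x s q : K) (k j : nat) : K :=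
  (\prod_(1 <= i < k.+1) fib x s q i%:Z) /
  ((\prod_(1 <= i < j.+1) fib x (q ^+ (j - i) * s) q i%:Z) *
   (\prod_(1 <= i < (k - j).+1) fib x (q ^+ j * s) q i%:Z)).
End Fib.

(* Main.v *)
Require Import Defs.
From HB Require Import structures.
From mathcomp Require Import all_boot all_order all_algebra.
From mathcomp Require Import ring lra zify.
Import Order.TTheory GRing.Theory Num.Theory.
Local Open Scope ring_scope.

Section Gen.
Variable K : fieldType.
Variables (x q : K).
Hypothesis hq : q != 0.

Definition F (s : K) (n : int) := fib x s q n.

Lemma fib_pos_spec (s : K) m : fib_pos x s q m = (F s m, F s (m.+1)%N).
Proof. rewrite /F /fib /=; by case: (fib_pos x s q m). Qed.

Lemma fib_neg_spec (s : K) m : fib_neg x s q m = (F s (- (m%:Z)), F s (1 - m%:Z)).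
Proof.
elim: m => [|m IH]; first by [].
have -> : - ((m.+1)%:Z) = Negz m by rewrite NegzE.
have -> : 1 - (m.+1)%:Z = - (m%:Z) by rewrite -addn1 PoszD; ring.
by rewrite /= IH /F /fib.
Qed.

Lemma F_rec (s : K) : s != 0 -> forall n : int, F s (n + 2) = x * F s (n + 1) + q ^ n * s * F s n.
Proof.
move=> hs [m|m].
- have -> : (Posz m + 2) = Posz m.+2 by rewrite -[in RHS]addn2 PoszD.
  have -> : (Posz m + 1) = Posz m.+1 by rewrite -[in RHS]addn1 PoszD.
  by rewrite /F /fib /=.
- have e1 : Negz m + 2 = 1 - m%:Z by rewrite NegzE -addn1 PoszD; ring.
  have e2 : Negz m + 1 = - m%:Z by rewrite NegzE -addn1 PoszD; ring.
  have e3 : Negz m = - (m%:Z) - 1 by rewrite NegzE -addn1 PoszD; ring.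
  rewrite e1 e2.
  have -> : F s (Negz m) = ((fib_neg x s q m).2 - x * (fib_neg x s q m).1) / (q ^ (- (m%:Z) - 1) * s) by [].
  rewrite fib_neg_spec /= e3.
  have hz : q ^ (- (m%:Z) - 1) != 0 by rewrite expfz_eq0 negb_and hq orbT.
  field. by rewrite hs hz.
Qed.

Definition sol (s : K) (y : int -> K) := forall n : int, y (n + 2) = x * y (n + 1) + q ^ n * s * y n.

Lemma sol_zero (s : K) y : s != 0 -> sol s y -> y 0 = 0 -> y 1 = 0 -> forall n, y n = 0.
Proof.
move=> hs hy y0 y1.
have fw : forall m : nat, y m = 0 /\ y (m.+1)%N = 0.
  elim=> [|m [IH1 IH2]]; first by split.
  split=> //.
  have -> : Posz m.+2 = Posz m + 2 by rewrite -[in LHS]addn2 PoszD.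
  rewrite hy.
  have -> : Posz m + 1 = Posz m.+1 by rewrite -[in RHS]addn1 PoszD.
  by rewrite IH1 IH2; ring.
have bw : forall m : nat, y (- (m%:Z)) = 0 /\ y (1 - m%:Z) = 0.
  elim=> [|m [IH1 IH2]]; first by split.
  have e1 : (- (m%:Z) - 1) + 2 = 1 - m%:Z by ring.
  have e2 : (- (m%:Z) - 1) + 1 = - m%:Z by ring.
  have := hy (- (m%:Z) - 1); rewrite e1 e2 IH1 IH2 mulr0 add0r => /esym /eqP.
  rewrite !mulf_eq0 expfz_eq0 (negbTE hq) (negbTE hs) /= andbF => /eqP h.
  have -> : 1 - ((m.+1)%:Z) = - (m%:Z) by rewrite -addn1 PoszD; ring.
  have -> : - ((m.+1)%:Z) = - (m%:Z) - 1 by rewrite -addn1 PoszD; ring.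
  by split.
case=> m; first by case: (fw m).
rewrite NegzE; by case: (bw m.+1).
Qed.

Lemma sol_eq (s : K) y z : s != 0 -> sol s y -> sol s z -> y 0 = z 0 -> y 1 = z 1 -> forall n, y n = z n.
Proof.
move=> hs hy hz e0 e1 n; apply/eqP; rewrite -subr_eq0; apply/eqP.
apply: (@sol_zero s (fun n => y n - z n)) => //; last by rewrite e1 subrr.
  by move=> m; rewrite hy hz; ring.
by rewrite e0 subrr.
Qed.

Lemma sol_lin (s : K) y z a b : sol s y -> sol s z -> sol s (fun n => a * y n + b * z n).
Proof. by move=> hy hz m; rewrite hy hz; ring. Qed.

Lemma sol_shift (s : K) j : s != 0 -> sol s (fun n => F (q ^+ j * s) (n - j%:Z)).
Proof.
move=> hs n.
have hs' : q ^+ j * s != 0 by rewrite mulf_neq0 // expf_neq0.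
have -> : n + 2 - j%:Z = (n - j%:Z) + 2 by ring.
have -> : n + 1 - j%:Z = (n - j%:Z) + 1 by ring.
rewrite F_rec // mulrA.
have -> : q ^ (n - j%:Z) * q ^+ j = q ^ n.
  by rewrite -[q ^+ j]/(q ^ (j%:Z)) -expfzDr // subrK.
by [].
Qed.

Lemma F_sol (s : K) : s != 0 -> sol s (F s).
Proof. by move=> hs n; rewrite F_rec. Qed.

Lemma DR (s : K) : s != 0 -> forall n, F s n = x * F (q ^+ 1 * s) (n - 1) + q * s * F (q ^+ 2 * s) (n - 2).
Proof.
move=> hs n.
apply: (@sol_eq s (F s) (fun n => x * F (q ^+ 1 * s) (n - 1) + q * s * F (q ^+ 2 * s) (n - 2))) => //.
- exact: F_sol.
- apply: sol_lin.
  + exact: (@sol_shift s 1 hs).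
  + exact: (@sol_shift s 2 hs).
- rewrite /F /fib /= ?subnn ?subn0 ?addn0 ?add0n ?addnK ?oppr0 ?sub0r ?exprzD_Nnat ?exprN1.
  field; by rewrite hq hs.
- rewrite /F /fib /= ?subnn ?subn0 ?addn0 ?add0n ?addnK ?oppr0 ?sub0r ?exprzD_Nnat ?exprN1.
  field; by rewrite hq hs.
Qed.


Lemma binS2 j : 'C(j.+1, 2) = ('C(j, 2) + j)%N.
Proof. by rewrite binS bin1. Qed.

Lemma NF (s : K) : s != 0 -> forall j : nat,
  F (q ^+ j * s) (- (j%:Z)) = - F s j%:Z / ((-1) ^+ j * s ^+ j * q ^+ 'C(j, 2)).
Proof.
move=> hs.
suff H : forall j : nat,
  F (q ^+ j * s) (- (j%:Z)) = - F s j%:Z / ((-1) ^+ j * s ^+ j * q ^+ 'C(j, 2)) /\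
  F (q ^+ j.+1 * s) (- (j.+1%:Z)) = - F s j.+1%:Z / ((-1) ^+ j.+1 * s ^+ j.+1 * q ^+ 'C(j.+1, 2)).
  by move=> j; case: (H j).
elim=> [|j [IH1 IH2]].
  split. by rewrite oppr0 /F /fib /= oppr0 mul0r.
  rewrite /F /fib /= ?subnn ?subn0 ?addn0 ?add0n ?addnK ?oppr0 ?sub0r ?exprzD_Nnat ?exprN1.
  field; by rewrite hq hs oppr_eq0 oner_eq0.
split=> //.
have hs' : q ^+ j * s != 0 by rewrite mulf_neq0 // expf_neq0.
have E := @DR (q ^+ j * s) hs' (- (j%:Z)).
have e1 : q ^+ 1 * (q ^+ j * s) = q ^+ j.+1 * s by rewrite mulrA -exprD add1n.
have e2 : q ^+ 2 * (q ^+ j * s) = q ^+ j.+2 * s by rewrite mulrA -exprD addnC addn2.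
have e3 : - (j%:Z) - 1 = - (j.+1%:Z) by rewrite -addn1 PoszD; ring.
have e4 : - (j%:Z) - 2 = - (j.+2%:Z) by rewrite -[in RHS]addn2 PoszD; ring.
rewrite e1 e2 e3 e4 IH1 IH2 in E.
have Fr := @F_rec s hs j.
have ej2 : Posz j + 2 = Posz j.+2 by rewrite -[in RHS]addn2 PoszD.
have ej1 : Posz j + 1 = Posz j.+1 by rewrite -[in RHS]addn1 PoszD.
rewrite ej2 ej1 in Fr.
rewrite {}Fr.
have hc : q ^+ j.+1 * s != 0 by rewrite mulf_neq0 // expf_neq0.
apply: (mulfI hc).
have -> : q ^+ j.+1 * s * F (q ^+ j.+2 * s) (- (j.+2%:Z)) = - F s j / ((-1) ^+ j * s ^+ j * q ^+ 'C(j, 2)) - x * (- F s j.+1 / ((-1) ^+ j.+1 * s ^+ j.+1 * q ^+ 'C(j.+1, 2))).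
  by rewrite E; ring.
rewrite !binS2 !exprD !exprS.
have h1 : (-1) ^+ j != 0 :> K by rewrite signr_eq0.
have h2 : s ^+ j != 0 by rewrite expf_neq0.
have h3 : q ^+ j != 0 by rewrite expf_neq0.
have h4 : q ^+ 'C(j, 2) != 0 by rewrite expf_neq0.
have qj : q ^ (j%:Z) = q ^+ j by [].
rewrite qj; field.
by rewrite h1 h2 h3 h4 hq hs oppr_eq0 oner_eq0.
Qed.


Definition good (s : K) := s != 0 /\ forall b i : nat, F (q ^+ b * s) (Posz i.+1) != 0.

Lemma good_q (s : K) : good s -> good (q * s).
Proof.
move=> [hs hF]; split; first by rewrite mulf_neq0.
by move=> b i; rewrite mulrA -exprSr; apply: hF.
Qed.

Lemma good_F (s : K) i : good s -> (0 < i)%N -> F s i%:Z != 0.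
Proof. by case=> _ hF; case: i => // i _; have := hF 0%N i; rewrite expr0 mul1r. Qed.

Lemma good_Fb (s : K) b i : good s -> (0 < i)%N -> F (q ^+ b * s) i%:Z != 0.
Proof. by case=> _ hF; case: i => // i _. Qed.

Lemma prod_neq0 (f : nat -> K) m : (forall l, (0 < l)%N -> f l != 0) -> \prod_(1 <= l < m) f l != 0.
Proof.
move=> hf; rewrite prodf_seq_neq0; apply/allP => l; rewrite mem_index_iota => /andP[h1 _].
exact: hf.
Qed.

Definition ee (j : nat) := ((j * (j - 1) * (2 * j - 1)) %/ 6)%N.

Lemma ee_S i : ee i.+1 = ('C(i, 2) + ('C(i, 2) + i) + ee i)%N.
Proof.
have sq : (i * i = 'C(i, 2) + ('C(i, 2) + i))%N.
  elim: i => [|i IH] //; rewrite binS2; lia.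
rewrite -sq /ee -divnMDl //; congr (_ %/ _)%N.
case: i {sq} => [|m] //; rewrite !subn1 /=; nia.
Qed.

Definition cc k j (s : K) := (-1) ^+ 'C(j.+1, 2) * s ^+ 'C(j, 2) *
    q ^+ ((j * (j - 1) * (2 * j - 1)) %/ 6) * fibonomial x s q k.+1 j.


Arguments fib : simpl never.

Lemma ccA k (s : K) j : good s -> (j <= k.+1)%N ->
  cc k.+1 j s * (F (q ^+ j * s) (Posz k.+2 - j%:Z) / F (q ^+ 0 * s) (Posz k.+2 - 0%:Z)) = cc k j s.
Proof.
move=> gs hj.
rewrite /cc /fibonomial subr0 expr0 mul1r subzn ?(leqW hj) // subSn //.
rewrite [\prod_(1 <= i < k.+3) _]big_nat_recr // [\prod_(1 <= i < (k.+1 - j).+2) _]big_nat_recr //=.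
set P := \prod_(1 <= i < k.+2) _.
set D1 := \prod_(1 <= i < j.+1) _.
set D2 := \prod_(1 <= i < (k.+1 - j).+1) _.
have hP : P != 0 by apply: prod_neq0 => l hl; apply: good_F.
have hD1 : D1 != 0 by apply: prod_neq0 => l hl; apply: good_Fb.
have hD2 : D2 != 0 by apply: prod_neq0 => l hl; apply: good_Fb.
have hF1 : F s (Posz k.+2) != 0 by apply: good_F.
have hF2 : F (q ^+ j * s) (Posz (k.+1 - j).+1) != 0 by apply: good_Fb.
rewrite /F in hF1 hF2 *.
field. by rewrite hD1 hD2 hF1 hF2.
Qed.


Lemma ccB k (s : K) i : good s -> (i <= k.+1)%N ->
  cc k.+1 i.+1 s * F (q ^+ i.+1 * s) (0 - (i.+1)%:Z) =
  - ((\prod_(1 <= l < k.+3) fib x s q l%:Z) / (s * \prod_(1 <= l < k.+2) fib x (q * s) q l%:Z))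
   * cc k i (q * s).
Proof.
move=> gs hi.
have hs : s != 0 by case: gs.
have gqs := @good_q s gs.
rewrite sub0r NF // /cc /fibonomial.
rewrite [\prod_(1 <= l < i.+2) _]big_nat_recr //= subnn expr0 mul1r.
have -> : \prod_(1 <= l < i.+1) fib x (q ^+ (i.+1 - l) * s) q l%:Z =
          \prod_(1 <= l < i.+1) fib x (q ^+ (i - l) * (q * s)) q l%:Z.
  apply: eq_big_nat => l /andP[_ hl]; rewrite subSn // exprS.
  congr (fib _ _ _ _); ring.
have qi : q ^+ i.+1 * s = q ^+ i * (q * s) by rewrite exprS; ring.
rewrite qi subSS.
rewrite -[((i.+1 * (i.+1 - 1) * (2 * i.+1 - 1)) %/ 6)%N]/(ee i.+1) ee_S.
rewrite -[((i * (i - 1) * (2 * i - 1)) %/ 6)%N]/(ee i).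
rewrite !binS2 !exprD !exprS exprMn.
set P1 := \prod_(1 <= l < k.+3) _.
set P2 := \prod_(1 <= l < k.+2) _.
set D1 := \prod_(1 <= l < i.+1) _.
set D2 := \prod_(1 <= l < (k.+1 - i).+1) _.
have hP1 : P1 != 0 by apply: prod_neq0 => l hl; apply: good_F.
have hP2 : P2 != 0 by apply: prod_neq0 => l hl; apply: good_F.
have hD1 : D1 != 0 by apply: prod_neq0 => l hl; apply: good_Fb.
have hD2 : D2 != 0 by apply: prod_neq0 => l hl; apply: good_Fb.
have hF1 : F s (Posz i.+1) != 0 by apply: good_F.
have h1 : (-1) ^+ i != 0 :> K by rewrite signr_eq0.
have h2 : s ^+ i != 0 by rewrite expf_neq0.
have h3 : q ^+ i != 0 by rewrite expf_neq0.
have h4 : q ^+ 'C(i, 2) != 0 by rewrite expf_neq0.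
have h5 : s ^+ 'C(i, 2) != 0 by rewrite expf_neq0.
rewrite /F in hF1 *.
field.
rewrite hD2 hD1 hP2 hs h3 h4 h2 h1 oppr_eq0 oner_eq0 /=.
by move: hF1; rewrite /fib.
Qed.


Definition G (s : K) (j : nat) (m : int) := F (q ^+ j * s) (m - j%:Z).

Lemma G_sol (s : K) j : s != 0 -> sol s (G s j).
Proof. exact: sol_shift. Qed.

Lemma Gjj (s : K) j : G s j j = 0.
Proof. by rewrite /G subrr. Qed.

Lemma G01 (s : K) : G s 0 1 = 1.
Proof. by []. Qed.

Lemma G00 (s : K) : G s 0 0 = 0.
Proof. by []. Qed.

Lemma GK0_neq0 (s : K) k : good s -> G s k 0 != 0 \/ k = 0%N.
Proof.
move=> gs; case: k => [|k]; [by right|left].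
have hs : s != 0 by case: gs.
rewrite /G sub0r NF // mulf_neq0 //.
  by rewrite oppr_eq0; apply: good_F.
by rewrite invr_eq0 !mulf_neq0 ?expf_neq0 ?signr_eq0 ?oppr_eq0 ?oner_eq0.
Qed.

Lemma decomp (s : K) k j : good s -> (j <= k.+2)%N -> forall m,
  G s j m = (G s j (Posz k.+2) / G s 0 (Posz k.+2)) * G s 0 m + (G s j 0 / G s k.+2 0) * G s k.+2 m.
Proof.
move=> gs hj.
have hs : s != 0 by case: gs.
set A := G s j (Posz k.+2) / G s 0 (Posz k.+2).
set B := G s j 0 / G s k.+2 0.
have hG0 : G s 0 (Posz k.+2) != 0 by rewrite /G subr0; apply: good_Fb.
have hGK : G s k.+2 0 != 0 by case: (@GK0_neq0 s k.+2 gs).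
set c1 := G s j 1 - (A * G s 0 1 + B * G s k.+2 1).
have H : forall m, G s j m = 1 * (A * G s 0 m + B * G s k.+2 m) + c1 * G s 0 m.
  apply: (@sol_eq s (G s j) (fun m => 1 * (A * G s 0 m + B * G s k.+2 m) + c1 * G s 0 m)) => //.
  - exact: G_sol.
  - apply: sol_lin; last exact: G_sol.
    by apply: sol_lin; exact: G_sol.
  - by rewrite G00 /B; field.
  - rewrite /c1 !G01; ring.
have Hc : c1 = 0.
  have := H (Posz k.+2); rewrite Gjj /A.
  move/eqP; rewrite -subr_eq0.
  have -> : G s j (Posz k.+2) - (1 * (G s j (Posz k.+2) / G s 0 (Posz k.+2) * G s 0 (Posz k.+2) + B * 0) + c1 * G s 0 (Posz k.+2)) = - (c1 * G s 0 (Posz k.+2)) by field.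
  by rewrite oppr_eq0 mulf_eq0 (negbTE hG0) orbF => /eqP.
by move=> m; rewrite H Hc; ring.
Qed.


Arguments G : simpl never.
Arguments F : simpl never.

Lemma main k : forall s : K, good s -> forall n : int,
  \sum_(0 <= j < k.+2) cc k j s * F (q ^+ j * s) (n - j%:Z) ^+ k = 0.
Proof.
elim: k => [|k IH] s gs n.
  have f1 : forall t, fib x t q 1 = 1 by [].
  rewrite !unlock /cc /fibonomial !unlock /= !f1 !expr0.
  rewrite binn expr1 !(mul1r, mulr1, invr1) addr0; exact: subrr.
have hs : s != 0 by case: gs.
have step : forall j, (0 <= j < k.+3)%N ->
  cc k.+1 j s * F (q ^+ j * s) (n - j%:Z) ^+ k.+1 =
  G s 0 n * (cc k.+1 j s * (G s j (Posz k.+2) / G s 0 (Posz k.+2)) * G s j n ^+ k) +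
  G s k.+2 n * (cc k.+1 j s * (G s j 0 / G s k.+2 0) * G s j n ^+ k).
  move=> j /andP[_ hj].
  rewrite exprSr -[F (q ^+ j * s) (n - j%:Z)]/(G s j n) (@decomp s k j gs hj n); ring.
rewrite (eq_big_nat _ _ step) big_split /= -!mulr_sumr.
rewrite big_nat_recr //= Gjj mul0r mulr0 mul0r addr0.
rewrite [\sum_(0 <= i < k.+3) _]big_nat_recl //= G00 mul0r mulr0 mul0r add0r.
have e1 : \sum_(0 <= i < k.+2) cc k.+1 i s * (G s i (Posz k.+2) / G s 0 (Posz k.+2)) * G s i n ^+ k = 0.
  rewrite -[RHS](IH s gs n); apply: eq_big_nat => i /andP[_ hi].
  by rewrite /G ccA.
have e2 : \sum_(0 <= i < k.+2) cc k.+1 i.+1 s * (G s i.+1 0 / G s k.+2 0) * G s i.+1 n ^+ k = 0.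
  have gqs := @good_q s gs.
  rewrite -[RHS](mulr0 (- ((\prod_(1 <= l < k.+3) fib x s q l%:Z) / (s * \prod_(1 <= l < k.+2) fib x (q * s) q l%:Z)) / G s k.+2 0)).
  rewrite -[X in _ * X](IH (q * s) gqs (n - 1)) mulr_sumr; apply: eq_big_nat => i /andP[_ hi].
  rewrite [in LHS]mulrA /G ccB //.
  have -> : q ^+ i.+1 * s = q ^+ i * (q * s) by rewrite exprS; ring.
  have -> : n - (i.+1)%:Z = n - 1 - i%:Z by rewrite -addn1 PoszD; ring.
  rewrite /F; ring.
by rewrite e1 e2 !mulr0 addr0.
Qed.

End Gen.


Section PF.
Variable R : idomainType.
Fixpoint pfib (X c qq : R) (m : nat) : R * R :=
  match m with
  | 0%N => (0, 1)
  | m'.+1 => let p := pfib X c qq m' in (p.2, X * p.2 + qq ^+ m' * c * p.1)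
  end.

Lemma pfib_tofrac (X c qq : R) m :
  fib_pos (tofrac X) (tofrac c) (tofrac qq) m = (tofrac (pfib X c qq m).1, tofrac (pfib X c qq m).2).
Proof.
elim: m => [|m IH] /=; first by rewrite tofrac0 tofrac1.
rewrite IH /=; congr pair.
by rewrite tofracD !tofracM tofracXn.
Qed.
End PF.

Section PS.
Variable R : idomainType.
Lemma pfib_size (c0 q0 : R) m :
  size (@pfib {poly R} 'X c0%:P q0%:P m).1 = m /\ size (@pfib {poly R} 'X c0%:P q0%:P m).2 = m.+1.
Proof.
elim: m => [|m [IH1 IH2]] /=; first by rewrite size_poly0 size_poly1.
split=> //.
have hne : (@pfib {poly R} 'X c0%:P q0%:P m).2 != 0 by rewrite -size_poly_eq0 IH2.
rewrite size_polyDl mulrC ?size_mulX ?IH2 //.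
rewrite -polyC_exp -polyCM.
apply: (leq_ltn_trans (size_polyMleq _ _)).
have := size_polyC_leq1 (q0 ^+ m * c0); rewrite IH1 [_ * (pfib _ _ _ _ _).2]mulrC size_mulX // IH2 => h; apply: (leq_ltn_trans (leq_pred _)); rewrite -addn2 ltn_add2l; exact: (leq_ltn_trans h).
Qed.
End PS.

Lemma varq_neq0 : varq != 0.
Proof. by rewrite /varq tofrac_eq0 polyC_eq0 /q_Fqs tofrac_eq0 polyC_eq0 /q_Fq tofrac_eq0 polyX_eq0. Qed.

Lemma vars_neq0 : vars != 0.
Proof. by rewrite /vars tofrac_eq0 polyC_eq0 /s_Fqs tofrac_eq0 polyX_eq0. Qed.

Lemma fibnz (b i : nat) : fib varx (varq ^+ b * vars) varq (Posz i.+1) != 0.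
Proof.
have e : varq ^+ b * vars = tofrac ((q_Fqs ^+ b * s_Fqs)%:P).
  by rewrite /varq /vars -tofracXn -tofracM -polyC_exp -polyCM.
rewrite e.
rewrite /fib /varx /varq.
rewrite pfib_tofrac /= tofrac_eq0 -size_poly_eq0.
by case: (@pfib_size _ (q_Fqs ^+ b * s_Fqs) q_Fqs i.+1) => ->.
Qed.

Lemma good_vars : @good _ varx varq vars.
Proof. split; [exact: vars_neq0 | move=> b i; exact: fibnz]. Qed.

Theorem theorem1 (k : nat) (hk : (0 < k)%N) (n : int) :
  \sum_(0 <= j < k.+2)
    (-1) ^+ 'C(j.+1, 2) * vars ^+ 'C(j, 2) *
    varq ^+ ((j * (j - 1) * (2 * j - 1)) %/ 6) *
    fibonomial varx vars varq k.+1 j *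
    (fib varx (varq ^+ j * vars) varq (n - j%:Z)) ^+ k = 0 :> Fxsq.
Proof. exact: (@main _ varx varq varq_neq0 k vars good_vars n). Qed.
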